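(* In the non-binary voting game (with a sequence of instances sharing the same parameters), there exists a constant $N_\mu>0$ such that for all $N>N_\mu$, the fraction of friendly agents satisfies $N_F/N<\mu$ and the fraction of unfriendly agents satisfies $N_U/N<1-\mu$.
   Context: Non-binary voting game. $N$ agents vote for $\mathbf{A}$ or $\mathbf{R}$; world states $\{1,\dots,\mathcal{W}\}$; threshold $\mu\in(0,1)$. Agent $n$ has utility $v_n$ on states $\times\{\mathbf{A},\mathbf{R}\}$ with $v_n(w,\mathbf{A})$ strictly increasing, $v_n(w,\mathbf{R})$ strictly decreasing in $w$, and $v_n(w,\mathbf{A})\ne v_n(w,\mathbf{R})$. Constants $\alpha^{\mathbf{A}}_w$, $\alpha^{\mathbf{R}}_w=1-\alpha^{\mathbf{A}}_w$ independent of $N$: exactly $\lfloor\alpha^{\mathbf{R}}_wN\rfloor$ agents prefer $\mathbf{R}$ in state $w$, the other $N-\lfloor\alpha^{\mathbf{R}}_wN\rfloor$ prefer $\mathbf{A}$; $\alpha^{\mathbf{A}}_w\ne\mu$ for all $w$. $\mathcal{L}=\{w:\alpha^{\mathbf{A}}_w<\mu\}$ and $\mathcal{H}=\{w:\alpha^{\mathbf{A}}_w>\mu\}$ are both nonempty. For agent $n$, $\mathcal{L}_n=\{w:v_n(w,\mathbf{R})>v_n(w,\mathbf{A})\}$, $\mathcal{H}_n=\{w:v_n(w,\mathbf{A})>v_n(w,\mathbf{R})\}$; $n$ is friendly if $\mathcal{L}\cap\mathcal{H}_n\ne\emptyset$, unfriendly if $\mathcal{H}\cap\mathcal{L}_n\ne\emptyset$.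 $N_F$, $N_U$ denote the numbers of friendly and unfriendly agents in the instance with $N$ agents. *)

(* Defs.v *)
From mathcomp Require Import all_boot all_order all_algebra.
From mathcomp Require Import reals.
Set Implicit Arguments. Unset Strict Implicit. Unset Printing Implicit Defensive.
Import Order.TTheory GRing.Theory Num.Theory.
Local Open Scope ring_scope.

Inductive outcome := oA | oR.

Section Voting.
Variables (R : realType) (W : nat).
(* World states {1,...,W} are represented by 'I_W (0,...,W-1), same order. *)
Variables (alphaA : 'I_W -> R) (mu : R).

Definition alphaR (w : 'I_W) : R := 1 - alphaA w.

Definition utility_profile (N : nat) := 'I_N -> 'I_W -> outcome -> R.

Definition prefersR N (v : utility_profile N) (n : 'I_N) (w : 'I_W) : bool :=
  v n w oA < v n w oR.
Definition prefersA N (v : utility_profile N) (n : 'I_N) (w : 'I_W) : bool :=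
  v n w oR < v n w oA.

Definition valid_instance N (v : utility_profile N) : Prop :=
  [/\ (forall n (w1 w2 : 'I_W), (w1 < w2)%N -> v n w1 oA < v n w2 oA),
      (forall n (w1 w2 : 'I_W), (w1 < w2)%N -> v n w2 oR < v n w1 oR),
      (forall n w, v n w oA != v n w oR),
      (forall w, (#|[set n | prefersR v n w]| : int) = Num.floor (alphaR w * N%:R)) &
      (forall w, (#|[set n | prefersA v n w]| : int) = N%:Z - Num.floor (alphaR w * N%:R))].

Definition Lset : pred 'I_W := fun w => alphaA w < mu.
Definition Hset : pred 'I_W := fun w => mu < alphaA w.

Definition friendly N (v : utility_profile N) (n : 'I_N) : bool :=
  [exists w, Lset w && prefersA v n w].
Definition unfriendly N (v : utility_profile N) (n : 'I_N) : bool :=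
  [exists w, Hset w && prefersR v n w].

Definition N_F N (v : utility_profile N) : nat := #|[set n | friendly v n]|.
Definition N_U N (v : utility_profile N) : nat := #|[set n | unfriendly v n]|.

End Voting.

(* Main.v *)
Require Import Defs.
From mathcomp Require Import all_boot all_order all_algebra.
From mathcomp Require Import reals.
From mathcomp Require Import lra.
Import Order.TTheory GRing.Theory Num.Theory.
Local Open Scope ring_scope.

Theorem proposition1 (R : realType) (W : nat) (alphaA : 'I_W -> R) (mu : R)
  (hmu : 0 < mu < 1)
  (hneq : forall w, alphaA w != mu)
  (hL : exists w, Lset alphaA mu w)
  (hH : exists w, Hset alphaA mu w)
  (v : forall N : nat, utility_profile R W N)
  (hv : forall N : nat, valid_instance alphaA (v N)) :
  exists Nmu : nat, (0 < Nmu)%N /\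
    forall N : nat, (Nmu < N)%N ->
      (N_F alphaA mu (v N))%:R / N%:R < mu /\
      (N_U alphaA mu (v N))%:R / N%:R < 1 - mu.
Proof.
have [wL LwL maxL] : exists2 wL, Lset alphaA mu wL &
    forall w, Lset alphaA mu w -> (w <= wL)%N.
  case: hL => w0 h0.
  by case: (arg_maxnP (fun w : 'I_W => val w) h0) => w Lw H; exists w.
have [wH HwH minH] : exists2 wH, Hset alphaA mu wH &
    forall w, Hset alphaA mu w -> (wH <= w)%N.
  case: hH => w0 h0.
  by case: (arg_minnP (fun w : 'I_W => val w) h0) => w Lw H; exists w.
move: LwL HwH; rewrite /Lset /Hset => LwL HwH.
set a := alphaA wL.
have ma : 0 < mu - a by rewrite subr_gt0.
exists (Num.Def.archi_bound (1 / (mu - a))).+1; split => // N HN.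
case: (hv N) => incA decR _ cR cA.
have N0 : (0 < N)%N := leq_ltn_trans (leq0n _) HN.
have N0r : 0 < N%:R :> R by rewrite ltr0n.
split.
- have sub : [set n | friendly alphaA mu (v N) n] \subset [set n | prefersA (v N) n wL].
    apply/subsetP => n; rewrite !inE => /existsP [w /andP [Lw pA]].
    have := maxL w Lw; rewrite leq_eqVlt => /orP [/eqP e | lt].
      by have -> : wL = w by apply: val_inj.
    move: pA; rewrite /prefersA => pA.
    have := incA n _ _ lt; have := decR n _ _ lt.
    move=> h1 h2; apply: (lt_trans h1); exact: (lt_trans pA).
  have le1 := subset_leq_card sub.
  rewrite ltr_pdivrMr //.
  apply: (le_lt_trans (y := #|[set n | prefersA (v N) n wL]|%:R)); first by rewrite ler_nat.
  have e : #|[set n | prefersA (v N) n wL]|%:R = (N%:Z - Num.floor (alphaR alphaA wL * N%:R))%:~R :> R.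
    by rewrite -(cA wL).
  rewrite e intrB.
  set x := alphaR alphaA wL * N%:R.
  have fl : x < (Num.floor x + 1)%:~R by rewrite -floor_lt_int ltzD1.
  rewrite intrD /= in fl.
  have hb := archi_boundP (x := 1 / (mu - a)) (ltW (divr_gt0 ltr01 ma)).
  have hN : (Num.Def.archi_bound (1 / (mu - a)))%:R < N%:R :> R.
    rewrite ltr_nat; exact: ltnW.
  have h1 : 1 < (mu - a) * N%:R.
    rewrite -ltr_pdivrMl // mulrC; exact: (lt_trans hb hN).
  have xe : x = (1 - a) * N%:R by [].
  rewrite xe in fl.
  have : (N%:Z)%:~R = N%:R :> R by rewrite pmulrn.
  move=> ->.
  nra.
- have sub : [set n | unfriendly alphaA mu (v N) n] \subset [set n | prefersR (v N) n wH].
    apply/subsetP => n; rewrite !inE => /existsP [w /andP [Hw pR]].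
    have := minH w Hw; rewrite leq_eqVlt => /orP [/eqP e | lt].
      by have -> : wH = w by apply: val_inj.
    move: pR; rewrite /prefersR => pR.
    have := incA n _ _ lt; have := decR n _ _ lt.
    move=> h1 h2; apply: (lt_trans h2); exact: (lt_trans pR).
  have le1 := subset_leq_card sub.
  rewrite ltr_pdivrMr //.
  apply: (le_lt_trans (y := #|[set n | prefersR (v N) n wH]|%:R)); first by rewrite ler_nat.
  have e : #|[set n | prefersR (v N) n wH]|%:R = (Num.floor (alphaR alphaA wH * N%:R))%:~R :> R.
    by rewrite -(cR wH).
  rewrite e.
  apply: (le_lt_trans (floor_le _)).
  rewrite /alphaR ltr_pM2r //; lra.
Qed.
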